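(* The weighted transverse map $\tau:\mathfrak{V}_n\to\mathfrak{W}_n$ satisfies: (i) for all $A\in\mathrm{GL}(n,\mathbb{Z})$ and $V\in\mathfrak{V}_n$, $\tau(A\cdot V)=A^*\cdot\tau(V)$, where $A^*=(A^{-1})^T$; (ii) for all $\sigma\in\mathfrak{S}_{n+1}$ and $V\in\mathfrak{V}_n$, $\tau(\sigma(V))=\tau(V)\ast\sigma$.
   Context: For $V=(\mathbf{v}_0,\ldots,\mathbf{v}_n)\in\mathrm{Mat}(n,n+1;\mathbb{Z})$ (columns indexed $0,\ldots,n$), $V_j$ is the determinant of $V$ with column $\mathbf{v}_j$ deleted and $V^0=(\mathbf{v}_1,\ldots,\mathbf{v}_n)$. $\mathfrak{V}_n$ is the set of F-admissible matrices: all $V_j\ne0$, $\gcd(V_0,\ldots,V_n)=1$, $\sum_j|V_j|\mathbf{v}_j=0$. $\tau(V)=((V^0)^{-1})^T\cdot\mathrm{lcm}(|V_0|,\ldots,|V_n|)\,\mathrm{diag}(1/|V_1|,\ldots,1/|V_n|)$, and $\mathfrak{W}_n=\tau(\mathfrak{V}_n)$. The permutation group $\mathfrak{S}_{n+1}$ of $\{0,\ldots,n\}$ acts on $\mathfrak{V}_n$ by $\sigma(V)=(\mathbf{v}_{\sigma(0)},\ldots,\mathbf{v}_{\sigma(n)})$ (right multiplication by the permutation matrix), and on $\mathfrak{W}_n$ by: for $W=(\mathbf{w}_1,\ldots,\mathbf{w}_n)$ and $\mathbf{w}_0:=\mathbf{0}$, $W\ast\sigma=(\mathbf{w}_{\sigma(1)}-\mathbf{w}_{\sigma(0)},\ldots,\mathbf{w}_{\sigma(n)}-\mathbf{w}_{\sigma(0)})$.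 *)

(* Defs.v *)
From HB Require Import structures.
From mathcomp Require Import all_boot all_order all_algebra all_fingroup.
Set Implicit Arguments. Unset Strict Implicit. Unset Printing Implicit Defensive.
Import Order.TTheory GRing.Theory Num.Theory.
Local Open Scope ring_scope.

(* Integer n x (n+1) matrices V = (v_0, ..., v_n); columns indexed by 'I_(n.+1). *)

Definition Vminor (n : nat) (V : 'M[int]_(n, n.+1)) (j : 'I_n.+1) : int :=
  \det (col' j V).

Definition V0mat (n : nat) (V : 'M[int]_(n, n.+1)) : 'M[int]_n := col' ord0 V.

Definition F_admissible (n : nat) (V : 'M[int]_(n, n.+1)) : Prop :=
  [/\ (forall j, Vminor V j != 0),
      (\big[gcdn/0%N]_(j < n.+1) `|Vminor V j|%N = 1%N) &
      \sum_(j < n.+1) `|Vminor V j| *: col j V = 0].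

Definition intmx (m k : nat) (M : 'M[int]_(m, k)) : 'M[rat]_(m, k) :=
  map_mx (fun z : int => z%:~R) M.

Definition lcmV (n : nat) (V : 'M[int]_(n, n.+1)) : nat :=
  \big[lcmn/1%N]_(j < n.+1) `|Vminor V j|%N.

Definition tau (n : nat) (V : 'M[int]_(n, n.+1)) : 'M[rat]_n :=
  (invmx (intmx (V0mat V)))^T *m
    diag_mx (\row_(i < n) ((lcmV V)%:R / (`|Vminor V (lift ord0 i)|%:R))).

Definition perm_act (n : nat) (s : 'S_n.+1) (V : 'M[int]_(n, n.+1))
  : 'M[int]_(n, n.+1) := col_perm s V.

Definition wcol (n : nat) (W : 'M[rat]_n) (j : 'I_n.+1) : 'cV[rat]_n :=
  match unlift ord0 j with Some i => col i W | None => 0 end.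

Definition star_act (n : nat) (W : 'M[rat]_n) (s : 'S_n.+1) : 'M[rat]_n :=
  \matrix_(r < n, k < n)
    (wcol W (s (lift ord0 k)) r 0 - wcol W (s ord0) r 0).

(* Main.v *)
Require Import Defs.
From HB Require Import structures.
From mathcomp Require Import all_boot all_order all_algebra all_fingroup.
Import GRing.Theory Num.Theory.
Local Open Scope ring_scope.


Lemma det_intmx n (M : 'M[int]_n) : \det (intmx M) = (\det M)%:~R.
Proof. by rewrite /intmx (det_map_mx intr). Qed.

Lemma intmxM m k p (A : 'M[int]_(m,k)) (B : 'M[int]_(k,p)) :
  intmx (A *m B) = intmx A *m intmx B.
Proof. by rewrite /intmx (map_mxM intr). Qed.

Lemma tau_char n (V : 'M[int]_(n, n.+1)) (M : 'M[rat]_n) :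
  Vminor V ord0 != 0 ->
  (intmx (V0mat V))^T *m M =
    diag_mx (\row_(i < n) ((lcmV V)%:R / (`|Vminor V (lift ord0 i)|%:R))) ->
  tau V = M.
Proof.
move=> nz H; rewrite /tau trmx_inv -H mulKmx //.
by rewrite unitmx_tr unitmxE det_intmx unitfE intr_eq0.
Qed.


Lemma col'_mul n (A : 'M[int]_n) (V : 'M[int]_(n, n.+1)) j :
  col' j (A *m V) = A *m col' j V.
Proof. by apply/matrixP => r k; rewrite !mxE; apply: eq_bigr => l _; rewrite mxE. Qed.

Lemma unit_abs1 (x : int) : x \is a GRing.unit -> `|x|%N = 1%N.
Proof.
case/unitrPr => y /(congr1 (fun z : int => `|z|%N)); rewrite abszM /= => /eqP.
by rewrite muln_eq1 => /andP [/eqP].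
Qed.

Lemma part1 n (A : 'M[int]_n) (V : 'M[int]_(n, n.+1)) :
  A \in unitmx -> F_admissible V ->
  tau (A *m V) = (invmx (intmx A))^T *m tau V.
Proof.
move=> uA [nz _ _].
have hm : forall j, `|Vminor (A *m V) j|%N = `|Vminor V j|%N.
  move=> j; rewrite /Vminor col'_mul det_mulmx abszM.
  by rewrite unit_abs1 ?mul1n // -unitmxE.
have hl : lcmV (A *m V) = lcmV V by rewrite /lcmV; apply: eq_bigr => j _; rewrite hm.
have uiA : intmx A \in unitmx.
  rewrite unitmxE det_intmx unitfE intr_eq0; apply/eqP => h; move: uA; by rewrite unitmxE h unitr0.
apply: tau_char.
  by rewrite -absz_eq0 hm absz_eq0.
rewrite hl.
under eq_mx do rewrite hm.
rewrite /V0mat col'_mul intmxM trmx_mul -!mulmxA.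
idtac.
rewrite [(intmx A)^T *m _]mulmxA -trmx_mul mulVmx // trmx1 mul1mx /tau trmx_inv mulKVmx //.
by rewrite unitmx_tr unitmxE det_intmx unitfE intr_eq0 nz.
Qed.

Section P2.

Set Implicit Arguments.

Lemma col'_perm n (s : 'S_n.+1) (j : 'I_n.+1) :
  exists p : 'S_n, forall m (A : 'M[int]_(m, n.+1)),
    col' j (col_perm s A) = col_perm p (col' (s j) A).
Proof.
pose f (k : 'I_n) := odflt k (unlift (s j) (s (lift j k))).
have hf : forall k, lift (s j) (f k) = s (lift j k).
  move=> k; rewrite /f; case: unliftP => //= /perm_inj /eqP.
  by rewrite eq_sym (negbTE (neq_lift _ _)).
have fi : injective f.
  by move=> k1 k2 e; apply: (@lift_inj _ j); apply: (@perm_inj _ s); rewrite -!hf e.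
exists (perm fi) => m A; apply/matrixP => r k; rewrite !mxE permE.
by rewrite hf.
Qed.

Lemma Vminor_perm n (s : 'S_n.+1) (V : 'M[int]_(n, n.+1)) j :
  `|Vminor (perm_act s V) j|%N = `|Vminor V (s j)|%N.
Proof.
have [p hp] := col'_perm s j.
by rewrite /Vminor /perm_act hp col_permE det_mulmx det_perm mulrC abszMsign.
Qed.

Definition cc n (V : 'M[int]_(n, n.+1)) (j : 'I_n.+1) : rat :=
  (lcmV V)%:R / (`|Vminor V j|%:R).

Lemma tauE n (V : 'M[int]_(n, n.+1)) : Vminor V ord0 != 0 ->
  (intmx (V0mat V))^T *m tau V = diag_mx (\row_(i < n) cc V (lift ord0 i)).
Proof.
move=> nz; rewrite /tau trmx_inv mulKVmx //.
by rewrite unitmx_tr unitmxE det_intmx unitfE intr_eq0.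
Qed.

Lemma Plem n (V : 'M[int]_(n, n.+1)) (a b : 'I_n.+1) : F_admissible V ->
  \sum_r (V r a)%:~R * wcol (tau V) b r 0 =
   (a == b)%:R * cc V b - (a == ord0)%:R * cc V ord0.
Proof.
move=> [nz _ rel].
have hE := @tauE _ V (nz ord0).
rewrite /wcol; case: unliftP => [i ->|->]; last first.
  by rewrite subrr; apply: big1 => r _; rewrite mxE mulr0.
case: (unliftP ord0 a) => [j ->|->].
  have -> : (lift ord0 j == ord0 :> 'I_n.+1) = false.
    by apply/negbTE; rewrite eq_sym neq_lift.
  rewrite (inj_eq lift_inj) mul0r subr0.
  transitivity (((intmx (V0mat V))^T *m tau V) j i).
    by rewrite !mxE; apply: eq_bigr => r _; rewrite !mxE.
  rewrite hE !mxE; case: eqP => [->|_]; first by rewrite mul1r.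
  by rewrite mul0r.
have -> : (ord0 == lift ord0 i :> 'I_n.+1) = false.
  by apply/negbTE; rewrite neq_lift.
rewrite mul0r eqxx mul1r sub0r.
have relr : forall r, \sum_j ((`|Vminor V j|%N)%:R : rat) * (V r j)%:~R = 0.
  move=> r; have := congr1 (fun M : 'cV[int]_n => ((M r 0)%:~R : rat)) rel.
  rewrite summxE rmorph_sum /= mxE rmorph0 => e; rewrite -[RHS]e.
  by apply: eq_bigr => j _; rewrite !mxE intrM -abszE.
have dnz : forall j, ((`|Vminor V j|%N)%:R : rat) != 0.
  by move=> j; rewrite pnatr_eq0 absz_eq0 nz.
have hX : forall k, \sum_r (V r (lift ord0 k))%:~R * tau V r i =
     cc V (lift ord0 k) *+ (k == i).
  move=> k; transitivity (((intmx (V0mat V))^T *m tau V) k i).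
    by rewrite !mxE; apply: eq_bigr => r _; rewrite !mxE.
  by rewrite hE !mxE.
apply: (mulfI (dnz ord0)).
rewrite /cc mulrN mulrCA mulfV // mulr1 mulr_sumr.
transitivity (\sum_r (- \sum_k ((`|Vminor V (lift ord0 k)|%N)%:R : rat)
                 * (V r (lift ord0 k))%:~R) * tau V r i).
  apply: eq_bigr => r _; rewrite mxE mulrA; congr (_ * _).
  by apply/eqP; rewrite -addr_eq0; apply/eqP; rewrite -[RHS](relr r) big_ord_recl.
under eq_bigr do rewrite mulNr mulr_suml.
rewrite sumrN exchange_big /=; congr (- _).
under eq_bigr do under eq_bigr do rewrite -mulrA.
under eq_bigr do rewrite -mulr_sumr hX.
rewrite (bigD1 i) //= eqxx mulr1n big1 ?addr0.
  by rewrite mulrCA mulfV // mulr1.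
by move=> k /negbTE ->; rewrite mulr0n mulr0.
Qed.

Lemma part2 n (s : 'S_n.+1) (V : 'M[int]_(n, n.+1)) :
  F_admissible V -> tau (perm_act s V) = star_act (tau V) s.
Proof.
move=> adm; have [nz _ _] := adm.
have hm := Vminor_perm s V.
have hl : lcmV (perm_act s V) = lcmV V.
  rewrite /lcmV; under eq_bigr do rewrite hm.
  by rewrite [RHS](reindex_inj (@perm_inj _ s)).
apply: tau_char.
  by rewrite -absz_eq0 hm absz_eq0.
apply/matrixP => j k; rewrite !mxE.
transitivity (\sum_r (V r (s (lift ord0 j)))%:~R *
   (wcol (tau V) (s (lift ord0 k)) r 0 - wcol (tau V) (s ord0) r 0)).
  by apply: eq_bigr => r _; rewrite !mxE.
under eq_bigr do rewrite mulrBr.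
rewrite sumrB !Plem // (inj_eq (@perm_inj _ s)) (inj_eq lift_inj).
rewrite (inj_eq (@perm_inj _ s)).
rewrite mul0r sub0r opprK subrK /cc hl hm.
by case: eqP => [->|_]; rewrite ?mul1r ?mul0r.
Qed.

End P2.

Theorem mainTheorem15 (n : nat) :
  (forall (A : 'M[int]_n) (V : 'M[int]_(n, n.+1)),
      A \in unitmx -> F_admissible V ->
      tau (A *m V) = (invmx (intmx A))^T *m tau V) /\
  (forall (s : 'S_n.+1) (V : 'M[int]_(n, n.+1)),
      F_admissible V ->
      tau (perm_act s V) = star_act (tau V) s).
Proof.
split; [exact: part1 | exact: part2].
Qed.
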